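(* There is a universal constant $c>0$ such that the following holds. Fix $0<\epsilon<1/8$. There exist a measurable space $\mathcal X$, a probability measure $\nu$ on $\mathcal X$ and a family $\mathcal U$ of probability measures on $\mathcal X$ such that for all $\mu\in\mathcal U$, $\nu\ll\mu$ and $\left\|\frac{d\nu}{d\mu}\right\|_\infty\le 4$, and such that the following holds. Any estimator $\widehat Z$ that, for every $\mu\in\mathcal U$ and every $Z>0$, given i.i.d. $X_1,\dots,X_n\sim\mu$ and the values $\lambda(X_i)$ of $\lambda=Z\cdot\frac{d\nu}{d\mu}$, satisfies $(1-\epsilon)Z\le\widehat Z\le(1+\epsilon)Z$ with probability at least $2/3$, must use $n\ge c/\epsilon^2$ samples.
   Context: An estimator is a measurable function of $(X_1,\dots,X_n,\lambda(X_1),\dots,\lambda(X_n))$ with no other access to $\mu$, $\lambda$ or $Z$. *)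

(* Defs.v *)
From HB Require Import structures.
From mathcomp Require Import all_boot all_order all_algebra.
From mathcomp Require Import all_classical all_reals all_analysis ess_sup_inf.
Set Implicit Arguments. Unset Strict Implicit. Unset Printing Implicit Defensive.
Import Order.TTheory GRing.Theory Num.Theory.
Local Open Scope classical_set_scope.
Local Open Scope ring_scope.

Section iid.
Context {d : measure_display} {T : measurableType d} {R : realType}.

(* Integral of f over n i.i.d. samples from mu, i.e. w.r.t. the n-fold
   product measure mu^{(x) n} on n.-tuple T, written as the iterated
   (Tonelli) integral  \int mu(dx_1) ... \int mu(dx_n) f (x_1,...,x_n). *)
Fixpoint iid_integral (mu : {measure set T -> \bar R}) (n : nat) :
    (n.-tuple T -> \bar R) -> \bar R :=
  match n return (n.-tuple T -> \bar R) -> \bar R with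
  | 0 => fun f => f [tuple]
  | n'.+1 => fun f =>
      (\int[mu]_x iid_integral mu (fun t : n'.-tuple T => f [tuple of x :: t]))%E
  end.

Definition iid_prob (mu : {measure set T -> \bar R}) (n : nat)
    (E : n.-tuple T -> bool) : \bar R :=
  iid_integral mu (fun t => ((E t)%:R)%:E).

(* f is a version of the Radon-Nikodym derivative d nu / d mu:
   f is measurable and nu(A) = \int_A f dmu for every measurable A. *)
Definition is_density (mu nu : {measure set T -> \bar R}) (f : T -> R) : Prop :=
  measurable_fun setT f /\
  forall A, measurable A -> nu A = (\int[mu]_(x in A) (f x)%:E)%E.

End iid.

(* Main.v *)
Require Import Defs.
From HB Require Import structures.
From mathcomp Require Import all_boot all_order all_algebra.
From mathcomp Require Import all_classical all_reals all_analysis ess_sup_inf.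
From mathcomp Require Import ring lra.
Import Order.TTheory GRing.Theory Num.Theory.
Local Open Scope classical_set_scope.
Local Open Scope ring_scope.

Section Ep.
Context {R : realType}.

Fixpoint Ep (p : R) (n : nat) : (n.-tuple bool -> R) -> R :=
  match n return (n.-tuple bool -> R) -> R with
  | 0 => fun g => g [tuple]
  | n'.+1 => fun g =>
      p * Ep p n' (fun t : n'.-tuple bool => g [tuple of true :: t]) +
      (1 - p) * Ep p n' (fun t : n'.-tuple bool => g [tuple of false :: t])
  end.
Arguments Ep p {n}.

Lemma Ep_lin p n (a b : R) (g h : n.-tuple bool -> R) :
  Ep p (fun t => a * g t + b * h t) = a * Ep p g + b * Ep p h.
Proof.
elim: n g h => [|n IH] g h //=.
rewrite (IH (fun t => g [tuple of true :: t])) (IH (fun t => g [tuple of false :: t])).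
ring.
Qed.

Lemma Ep_ext p n (g h : n.-tuple bool -> R) : (forall t, g t = h t) -> Ep p g = Ep p h.
Proof. by move=> e; congr Ep; apply/funext. Qed.
Arguments Ep_ext p {n g h}.

Lemma Ep_cst p n (c : R) : Ep p (fun _ : n.-tuple bool => c) = c.
Proof. elim: n => [|n IH] //=; rewrite !IH; ring. Qed.

Lemma Ep_le p n (g h : n.-tuple bool -> R) : 0 <= p <= 1 ->
  (forall t, g t <= h t) -> Ep p g <= Ep p h.
Proof.
move=> /andP[p0 p1]; elim: n g h => [|n IH] g h gh //=.
rewrite lerD // ler_wpM2l ?subr_ge0 //; exact: IH.
Qed.

Definition Lr (p q : R) (n : nat) (t : n.-tuple bool) : R :=
  \prod_(x <- t) (if x then p / q else (1 - p) / (1 - q)).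
Arguments Lr p q {n}.

Lemma Lr_cons p q n x (t : n.-tuple bool) : Lr p q [tuple of x :: t] =
  (if x then p / q else (1 - p) / (1 - q)) * Lr p q t.
Proof. by rewrite /Lr (_ : tval [tuple of x :: t] = x :: tval t) // big_cons. Qed.

Lemma Ep_change p q n (g : n.-tuple bool -> R) : q != 0 -> 1 - q != 0 ->
  Ep p g = Ep q (fun t => g t * Lr p q t).
Proof.
move=> q0 q1; elim: n g => [|n IH] g /=.
  by rewrite /Lr big_nil mulr1.
rewrite !IH.
rewrite (Ep_ext q (g := fun t => g [tuple of true :: t] * Lr p q [tuple of true :: t])
  (h := fun t => (p / q) * (g [tuple of true :: t] * Lr p q t) + 0 * 0)); last first.
  by move=> t; rewrite Lr_cons /=; ring.
rewrite (Ep_ext q (g := fun t => g [tuple of false :: t] * Lr p q [tuple of false :: t])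
  (h := fun t => ((1 - p) / (1 - q)) * (g [tuple of false :: t] * Lr p q t) + 0 * 0)); last first.
  by move=> t; rewrite Lr_cons /=; ring.
rewrite !Ep_lin; field; by rewrite q0 q1.
Qed.

Lemma Ep_L2 p q n : Ep q (fun t : n.-tuple bool => Lr p q t ^+ 2) =
  (q * (p / q) ^+ 2 + (1 - q) * ((1 - p) / (1 - q)) ^+ 2) ^+ n.
Proof.
elim: n => [|n IH] /=; first by rewrite /Lr big_nil expr1n.
rewrite (Ep_ext q (g := fun t => Lr p q [tuple of true :: t] ^+ 2)
  (h := fun t => (p / q) ^+ 2 * (Lr p q t ^+ 2) + 0 * 0)); last first.
  by move=> t; rewrite Lr_cons /=; ring.
rewrite (Ep_ext q (g := fun t => Lr p q [tuple of false :: t] ^+ 2)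
  (h := fun t => ((1 - p) / (1 - q)) ^+ 2 * (Lr p q t ^+ 2) + 0 * 0)); last first.
  by move=> t; rewrite Lr_cons /=; ring.
rewrite !Ep_lin IH !mul0r !addr0 [RHS]exprS; ring.
Qed.

End Ep.
Arguments Ep {R} p {n}.
Arguments Lr {R} p q {n}.
Arguments Ep_ext {R} p {n g h}.


Section M.
Context {R : realType}.

Lemma iid_bern (p : R) n (g : n.-tuple bool -> R) : 0 <= p <= 1 -> (forall t, 0 <= g t) ->
  iid_integral (bernoulli_prob p) (fun t => (g t)%:E) = (Ep p g)%:E.
Proof.
elim: n g => [|n IH] g p01 g0 //=.
rewrite (_ : (fun x => iid_integral _ _) = fun x => (Ep p (fun t => g [tuple of x :: t]))%:E); last first.
  by apply/funext=> x; apply: IH.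
have h0 : forall x, (0 <= (Ep p (fun t : n.-tuple bool => g [tuple of x :: t]))%:E)%E.
  by move=> x; rewrite lee_fin -(@Ep_cst _ p n 0); apply: Ep_le.
by rewrite integral_bernoulli_prob.
Qed.

Definition fq (q : R) (x : bool) : R := if x then q^-1 else 0.

Lemma dom_ok (q : R) : 0 < q <= 1 -> (\d_true : {measure set bool -> \bar R}) `<< bernoulli_prob q.
Proof.
move=> /andP[q0 q1]; apply/null_content_dominatesP => A mA /=.
rewrite bernoulli_probE; last by rewrite q1 ltW.
rewrite !diracE -!EFinM -EFinD => -[] h.
apply/congr1; move: h.
case: (true \in A); case: (false \in A) => /=; rewrite /unstable.onem; lra.
Qed.

Lemma dens_ok (q : R) : 0 < q <= 1 -> is_density (bernoulli_prob q) \d_true (fq q).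
Proof.
move=> /andP[q0 q1]; split => // A mA.
have p01 : 0 <= q <= 1 by apply/andP; split => //; exact: ltW.
have h0 : forall x, (0 <= (fun x => (fq q x)%:E) \_ A x)%E.
  move=> x; rewrite /patch /fq; case: ifP => // _; case: x => //.
  by rewrite lee_fin invr_ge0 ltW.
rewrite integral_mkcond integral_bernoulli_prob //.
  have pt : (point : \bar R) = 0%E by [].
  rewrite /patch /fq /= /dirac /= indicE pt.
  case: (true \in A); case: (false \in A) => /=; rewrite ?mule0 ?adde0 ?add0e -?EFinM ?mulfV ?gt_eqF //.
Qed.

Lemma ess_ok (q : R) : 1/4 <= q <= 1 ->
  (ess_sup (bernoulli_prob q) (fun x => (fq q x)%:E) <= 4%:E)%E.
Proof.
move=> /andP[q0 q1]; apply/ess_supP; apply: aeW => x.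
rewrite /fq lee_fin; case: x => //.
have qp : 0 < q by lra.
by rewrite invf_ple ?qp ?posrE // -div1r.
Qed.

End M.

Section K.
Context {R : realType}.

Lemma pow_bound (x : R) n : 0 <= x -> (1 + x) ^+ n * (1 - n%:R * x) <= 1.
Proof.
move=> x0; elim: n => [|n IH]; first by rewrite expr0 mul0r subr0 mul1r.
apply: le_trans IH; rewrite exprSr -mulrA.
apply: ler_wpM2l; first by apply: exprn_ge0; lra.
have n0 : 0 <= n%:R :> R by [].
rewrite -natr1; nra.
Qed.

Lemma key (p : R) n (g1 g2 : n.-tuple bool -> R) : 0 < p < 1 ->
  (forall t, 0 <= g1 t <= 1) -> (forall t, 0 <= g2 t) -> (forall t, g1 t + g2 t <= 1) ->
  2/3 <= Ep (1/2) g1 -> 2/3 <= Ep p g2 ->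
  10/9 <= (1 + (2 * p - 1) ^+ 2) ^+ n.
Proof.
move=> /andP[p0 p1] g1b g2b g12 H1 H2.
have p01 : 0 <= p <= 1 by apply/andP; split; lra.
set q : R := 1/2.
have q0 : q != 0 by rewrite /q; apply/eqP; lra.
have q1 : 1 - q != 0 by rewrite /q; apply/eqP; lra.
have A : Ep p g1 <= 1/3.
  have := @Ep_le R p n g1 (fun t => 1 * 1 + (-1) * g2 t) p01.
  rewrite Ep_lin Ep_cst => h; have := h _; move=> {}h.
  suff : Ep p g1 <= 1 * 1 + -1 * Ep p g2 by lra.
  apply: h => t; have := g12 t; lra.
have B := @Ep_change R p q n g1 q0 q1.
have C : Ep q (fun t : n.-tuple bool => Lr p q t) = 1.
  transitivity (Ep q (fun t : n.-tuple bool => 1 * Lr p q t)).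
    by apply: Ep_ext => t; rewrite mul1r.
  by rewrite -(@Ep_change R p q n (fun _ => 1) q0 q1) Ep_cst.
have D := Ep_L2 p q n.
have Dq : q * (p / q) ^+ 2 + (1 - q) * ((1 - p) / (1 - q)) ^+ 2 = 1 + (2 * p - 1) ^+ 2.
  by rewrite /q; field.
rewrite Dq in D.
have E1 := Ep_lin q n 2 (-2) g1 (fun t => g1 t * Lr p q t).
have E2 := Ep_lin q n 1 3 (fun t => (10/3) * 1 + (-6) * Lr p q t) (fun t => Lr p q t ^+ 2).
have E3 := Ep_lin q n (10/3) (-6) (fun _ => 1) (fun t => Lr p q t).
rewrite E3 Ep_cst C D in E2.
have L := @Ep_le R q n (fun t => 2 * g1 t + (-2) * (g1 t * Lr p q t))
  (fun t => 1 * ((10/3) * 1 + (-6) * Lr p q t) + 3 * (Lr p q t ^+ 2)).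
rewrite E1 E2 -B in L.
have : 2 * Ep q g1 + -2 * Ep p g1 <= 1 * (10 / 3 * 1 + -6 * 1) + 3 * (1 + (2 * p - 1) ^+ 2) ^+ n.
  apply: L; first by rewrite /q; apply/andP; split; lra.
  move=> t; have := g1b t; move=> /andP[a b].
  set l := Lr p q t; have h1 := sqr_ge0 (g1 t - 3 * (1 - l)); have h2 : g1 t * g1 t <= 1 by nra. nra.
lra.
Qed.

End K.

Theorem proposition12 (R : realType) :
  exists c : R, 0 < c /\
  forall eps : R, 0 < eps -> eps < 1 / 8 ->
  exists (d : measure_display) (T : measurableType d)
         (nu : probability T R) (U : set (probability T R)),
    (forall mu : probability T R, U mu ->
       nu `<< mu /\
       exists f : T -> R, is_density mu nu f /\
         (ess_sup mu (fun x => (f x)%:E) <= 4%:E)%E) /\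
    forall (n : nat) (Zhat : n.-tuple T * n.-tuple R -> R),
      measurable_fun setT Zhat ->
      (forall mu : probability T R, U mu ->
       forall Z : R, 0 < Z ->
       forall f : T -> R, is_density mu nu f ->
         ((2 / 3)%:E <=
            iid_prob mu (fun xs : n.-tuple T =>
              ((1 - eps) * Z <= Zhat (xs, map_tuple (fun x => Z * f x) xs)
                <= (1 + eps) * Z)%R))%E) ->
      c / eps ^+ 2 <= n%:R.
Proof.
exists (1/160); split; first lra.
move=> e e0 e8.
pose p : R := (1 + 4 * e) / 2.
have hp1 : 1/4 <= p <= 1 by apply/andP; rewrite /p; split; lra.
have hh : 1/4 <= (1/2 : R) <= 1 by apply/andP; split; lra.
have pos (q : R) : 1/4 <= q <= 1 -> 0 < q <= 1.
  by move=> /andP[a b]; apply/andP; split; lra.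
exists default_measure_display, bool, (\d_true : probability bool R),
  (fun mu => mu = (bernoulli_prob (1/2) : probability bool R) \/
             mu = (bernoulli_prob p : probability bool R)).
split.
  move=> mu [->|->].
    split; first exact: dom_ok (pos _ hh).
    by exists (fq (1/2)); split; [exact: dens_ok (pos _ hh) | exact: ess_ok].
  split; first exact: dom_ok (pos _ hp1).
  by exists (fq p); split; [exact: dens_ok (pos _ hp1) | exact: ess_ok].
move=> n Zhat _ H.
have H1 := H _ (or_introl erefl) (1/2) ltac:(lra) (fq (1/2)) (@dens_ok R (1/2) (pos _ hh)).
have H2 := H _ (or_intror erefl) p ltac:(rewrite /p; lra) (fq p) (@dens_ok R p (pos _ hp1)).
pose lam (x : bool) : R := if x then 1 else 0.
have M1 : (fun x => 1/2 * fq (1/2) x) = lam.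
  by apply/funext => -[]; rewrite /fq /lam /= ?mulr0 // mulfV //; apply/eqP; lra.
have M2 : (fun x => p * fq p x) = lam.
  by apply/funext => -[]; rewrite /fq /lam /= ?mulr0 // mulfV //; apply/eqP; rewrite /p; lra.
rewrite M1 in H1; rewrite M2 in H2.
pose g1 (t : n.-tuple bool) : R :=
  (((1 - e) * (1/2) <= Zhat (t, map_tuple lam t) <= (1 + e) * (1/2))%R)%:R.
pose g2 (t : n.-tuple bool) : R :=
  (((1 - e) * p <= Zhat (t, map_tuple lam t) <= (1 + e) * p)%R)%:R.
have g0 (b : bool) : 0 <= b%:R :> R by case: b.
have g01 (b : bool) : (0 : R) <= b%:R <= 1 by case: b; rewrite /= ?mulr1n ?mulr0n ?ler01 ?lexx.
have P1 : 2/3 <= Ep (1/2) g1.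
  move: H1; rewrite /iid_prob (@iid_bern R (1/2) n g1) ?lee_fin //.
  by apply/andP; split; lra.
have P2 : 2/3 <= Ep p g2.
  move: H2; rewrite /iid_prob (@iid_bern R p n g2) ?lee_fin //.
  by apply/andP; rewrite /p; split; lra.
have K := @key R p n g1 g2.
have : 10/9 <= (1 + (2 * p - 1) ^+ 2) ^+ n.
  apply: K => //.
  - by apply/andP; rewrite /p; split; lra.
  - by move=> t; apply: g01.
  - move=> t; rewrite /g1 /g2.
    case/boolP: ((1 - e) * (1/2) <= Zhat (t, map_tuple lam t) <= (1 + e) * (1/2))%R => [/andP[a b]|_];
    case/boolP: ((1 - e) * p <= Zhat (t, map_tuple lam t) <= (1 + e) * p)%R => [/andP[c d]|_] /=;
    rewrite ?mulr1n ?mulr0n; try lra.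
    have : (1 + e) * (1/2) < (1 - e) * p by rewrite /p; nra.
    lra.
have Ex : (2 * p - 1) ^+ 2 = 16 * e ^+ 2 by rewrite /p; field.
rewrite Ex => h10.
have hb := @pow_bound R (16 * e ^+ 2) n ltac:(nra).
have e2 : 0 < e ^+ 2 by rewrite exprn_gt0.
rewrite ler_pdivrMr //.
set A := (1 + 16 * e ^+ 2) ^+ n in h10 hb.
set y := n%:R * e ^+ 2.
have hy : n%:R * (16 * e ^+ 2) = 16 * y by rewrite /y; ring.
rewrite hy in hb.
have : 1/10 <= 16 * y by nra.
lra.
Qed.
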